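(* Let $m\ge 38$ be even and let $G$ be a graph with maximum spectral radius among all $H(4,3)$-free graphs with $m$ edges and no isolated vertices. Let $\mathbf{x}$ be the Perron vector of $G$, $u^*$ a vertex maximizing $x_{u^*}$, $N = N(u^* )$, $A_+ = \{v\in N : d_N(v)\ge 1\}$ and $W = V(G)\setminus N[u^*]$. If $G[A_+]\cong K_{1,t}$ for some $t\ge 1$, then $W=\emptyset$.
   Context: All graphs are simple and undirected; $\rho(G)$ is the largest adjacency eigenvalue and the Perron vector is the positive unit eigenvector for $\rho(G)$ (the extremal $G$ is connected). $H(4,3)$ is the graph formed by a cycle of length $4$ and a triangle sharing exactly one common vertex. $N(v)$ denotes the neighbourhood of $v$, $N[v]=N(v)\cup\{v\}$, $d_S(v)=|N(v)\cap S|$, and $G[S]$ is the subgraph induced by $S$. *)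

(* Defs.v *)
From HB Require Import structures.
From mathcomp Require Import all_boot all_order all_algebra.
From mathcomp Require Import reals.
Set Implicit Arguments. Unset Strict Implicit. Unset Printing Implicit Defensive.
Import Order.TTheory GRing.Theory Num.Theory.
Local Open Scope ring_scope.

Definition simple_graph (n : nat) (e : rel 'I_n) : Prop :=
  symmetric e /\ irreflexive e.

Definition nedges (n : nat) (e : rel 'I_n) : nat :=
  #|[set p : 'I_n * 'I_n | e p.1 p.2 && (p.1 < p.2)%N]|.

Definition no_isolated (n : nat) (e : rel 'I_n) : Prop :=
  forall v : 'I_n, exists w, e v w.

(* H(4,3): a 4-cycle c-a1-a2-a3-c and a triangle c-p-q sharing only c.
   G contains H(4,3) (as a subgraph) iff there are 6 distinct vertices with
   these 7 edges. *)
Definition contains_H43 (n : nat) (e : rel 'I_n) : Prop :=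
  exists c a1 a2 a3 p q : 'I_n,
    [/\ uniq [:: c; a1; a2; a3; p; q],
        [&& e c a1, e a1 a2, e a2 a3 & e a3 c] &
        [&& e c p, e p q & e q c]].

Definition H43_free (n : nat) (e : rel 'I_n) : Prop := ~ contains_H43 e.

Definition adj (R : realType) (n : nat) (e : rel 'I_n) : 'M[R]_n :=
  \matrix_(i, j) (e i j)%:R.

Definition is_spectral_radius (R : realType) (n : nat) (e : rel 'I_n) (r : R)
  : Prop :=
  eigenvalue (adj R e) r /\ (forall l : R, eigenvalue (adj R e) l -> l <= r).

Definition perron_vector (R : realType) (n : nat) (e : rel 'I_n) (r : R)
  (x : 'cV[R]_n) : Prop :=
  [/\ forall i, 0 < x i 0,
      \sum_i x i 0 ^+ 2 = 1 &
      adj R e *m x = r *: x].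

Definition extremal_H43 (R : realType) (m n : nat) (e : rel 'I_n) (r : R)
  : Prop :=
  [/\ simple_graph e, H43_free e, nedges e = m, no_isolated e &
      is_spectral_radius e r] /\
      (forall (n' : nat) (e' : rel 'I_n') (r' : R),
        simple_graph e' -> H43_free e' -> nedges e' = m -> no_isolated e' ->
        is_spectral_radius e' r' -> r' <= r).

Definition nbh (n : nat) (e : rel 'I_n) (u : 'I_n) : {set 'I_n} :=
  [set v | e u v].

(* Main.v *)
Require Import Defs.
From HB Require Import structures.
From mathcomp Require Import all_boot all_order all_algebra.
From mathcomp Require Import reals.
From mathcomp Require Import ring lra zify.
Import Order.TTheory GRing.Theory Num.Theory.
Local Open Scope ring_scope.

Lemma nedges_sum (n : nat) (e : rel 'I_n) :
  nedges e = (\sum_i \sum_j (e i j && (i < j)%N : nat))%N.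
Proof.
rewrite /nedges -sum1_card big_mkcond /=.
rewrite (pair_big xpredT xpredT (fun i j => (e i j && (i < j)%N : nat))) /=.
by apply: eq_bigr => -[i j] _; rewrite inE /=; case: (_ && _).
Qed.

Lemma handshake (n : nat) (e : rel 'I_n) : simple_graph e ->
  ((nedges e).*2 = \sum_i \sum_j (e i j : nat))%N.
Proof.
move=> [se ie]; rewrite nedges_sum -addnn.
have -> : (\sum_i \sum_j (e i j : nat) =
   \sum_i \sum_j (e i j && (i < j)%N : nat) + \sum_i \sum_j (e i j && (j < i)%N : nat))%N.
  rewrite -big_split; apply: eq_bigr => i _; rewrite -big_split; apply: eq_bigr => j _ /=.
  case: (ltngtP i j) => h; rewrite ?andbT ?andbF ?addn0 ?add0n //.
  have hij : i = j by apply: val_inj.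
  by rewrite hij ie.
congr (_ + _)%N; rewrite exchange_big /=; apply: eq_bigr => i _; apply: eq_bigr => j _.
by rewrite se.
Qed.


Lemma perron_max (R : realType) (n : nat) (e : rel 'I_n) (lam : R) (y : 'I_n -> R) (i0 : 'I_n) :
  symmetric e -> (forall i, 0 < y i) ->
  (forall i, \sum_j (e i j)%:R * y j = lam * y i) -> is_spectral_radius e lam.
Proof.
move=> se yp ey; split.
  apply/eigenvalueP; exists (\row_j y j).
    apply/rowP => j; rewrite !mxE -ey; apply: eq_bigr => i _.
    by rewrite !mxE se mulrC.
  apply/eqP => /rowP /(_ i0); rewrite !mxE => h.
  by move: (yp i0); rewrite h ltxx.
move=> l /eigenvalueP [z hz nz].
have key : forall j, `|l| * `|z 0 j| <= \sum_i `|z 0 i| * (e j i)%:R.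
  move=> j; have := congr1 (fun M : 'rV_n => M 0 j) hz; rewrite !mxE => h.
  rewrite -normrM -h; apply: le_trans (ler_norm_sum _ _ _) _.
  apply: ler_sum => i _; rewrite mxE normrM se.
  by rewrite (ger0_norm (ler0n _ _)).
set S := \sum_j `|z 0 j| * y j.
have Sp : 0 < S.
  case: (pickP (fun j => z 0 j != 0)) => [j zj|h]; last first.
    exfalso; move/negP: nz; apply; apply/eqP/rowP => j; rewrite mxE.
    by move/negbFE: (h j) => /eqP.
  rewrite /S (bigD1 j) //=.
  have h1 : 0 < `|z 0 j| * y j by rewrite mulr_gt0 ?normr_gt0.
  have h2 : 0 <= \sum_(i | i != j) `|z 0 i| * y i.
    by apply: sumr_ge0 => i _; rewrite mulr_ge0 ?normr_ge0 ?ltW.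
  lra.
have : `|l| * S <= lam * S.
  rewrite /S mulr_sumr.
  apply: (@le_trans _ _ (\sum_j (\sum_i `|z 0 i| * (e j i)%:R) * y j)).
    by apply: ler_sum => j _; rewrite mulrA ler_wpM2r // ltW.
  under eq_bigr do rewrite mulr_suml.
  rewrite exchange_big /= mulr_sumr; apply: ler_sum => i _.
  rewrite (mulrCA lam) -ey mulr_sumr; rewrite le_eqVlt; apply/orP; left; apply/eqP/eq_bigr => j _.
  by rewrite se mulrA.
have lel := ler_norm l.
rewrite -subr_ge0 -mulrBl pmulr_lge0 // subr_ge0 => h.
exact: le_trans lel h.
Qed.

Lemma lam_exists (R : realType) (k : nat) : exists lam : R,
  [/\ k%:R + 1 <= lam ^+ 2, 0 < lam &
      (lam ^+ 2 - k%:R) * (lam ^+ 2 - 1 - k%:R) = (lam + k%:R) ^+ 2].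
Proof.
set K : R := k%:R.
have K0 : 0 <= K by rewrite /K ler0n.
pose p : {poly R} := ('X^2 - K%:P) * ('X^2 - (1 + K)%:P) - ('X + K%:P) ^+ 2.
have pE x : p.[x] = (x ^+ 2 - K) * (x ^+ 2 - 1 - K) - (x + K) ^+ 2.
  by rewrite /p !hornerE opprD addrA.
set a := Num.sqrt (K + 1).
have a0 : 0 <= a by rewrite sqrtr_ge0.
have a2 : a ^+ 2 = K + 1 by rewrite sqr_sqrtr // addr_ge0.
have [x /andP [ax xb] /rootP rx] : exists2 x, a <= x <= K + 3 & root p x.
  apply: poly_ivt.
    nra.
  rewrite !pE; apply/andP; split; nra.
exists x; split; first by nra.
  by nra.
by move: rx; rewrite pE => /eqP; rewrite subr_eq0 => /eqP.
Qed.
Definition fcomp (i j : nat) : bool := ((i == 0%N) && (j != 0%N)) || ((i == 1%N) && (2 < j)%N).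
Definition ecomp (k : nat) : rel 'I_k.+3 := fun i j => fcomp i j || fcomp j i.
Arguments ecomp {k}.

Lemma comp_simple k : simple_graph (@ecomp k).
Proof.
split; first by move=> i j; rewrite /ecomp orbC.
move=> i; rewrite /ecomp orbb /fcomp.
by case: (nat_of_ord i) => [|[|]].
Qed.

Lemma comp_noiso k : no_isolated (@ecomp k).
Proof.
move=> v; case: (boolP (nat_of_ord v == 0)) => hv.
  exists (Ordinal (isT : 1 < k.+3)%N); by rewrite /ecomp /fcomp hv.
exists (Ordinal (isT : 0 < k.+3)%N); by rewrite /ecomp /fcomp /= hv orbT.
Qed.

Lemma comp_edge01 k (i j : 'I_k.+3) : ecomp i j -> (i <= 1)%N || (j <= 1)%N.
Proof.
rewrite /ecomp /fcomp => /orP [] /orP [] /andP [/eqP -> _]; by rewrite ?orbT.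
Qed.

Lemma three01 (x y z : nat) : (x <= 1)%N -> (y <= 1)%N -> (z <= 1)%N ->
  x != y -> y != z -> x != z -> False.
Proof. lia. Qed.

Lemma comp_free k : H43_free (@ecomp k).
Proof.
move=> [c [a1 [a2 [a3 [p [q [U /and4P [h1 h2 h3 h4] /and3P [t1 t2 t3]]]]]]]].
have ne : forall x y : 'I_k.+3, x = y -> (x \in [:: c; a1; a2; a3; p; q]) ->
   (y \in [:: c; a1; a2; a3; p; q]) -> True by [].
move/comp_edge01: h2 => /orP [] ha; move/comp_edge01: t1 => /orP [] hb;
move/comp_edge01: t2 => /orP [] hc; move/comp_edge01: t3 => /orP [] hd;
solve [
  (apply: (@three01 (val c) (val a1) (val p)) => //;
   apply/negP => /eqP /val_inj E; move: U; rewrite E /= !inE eqxx ?orbT ?andbF //) |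
  (apply: (@three01 (val c) (val a1) (val q)) => //;
   apply/negP => /eqP /val_inj E; move: U; rewrite E /= !inE eqxx ?orbT ?andbF //) |
  (apply: (@three01 (val c) (val a2) (val p)) => //;
   apply/negP => /eqP /val_inj E; move: U; rewrite E /= !inE eqxx ?orbT ?andbF //) |
  (apply: (@three01 (val c) (val a2) (val q)) => //;
   apply/negP => /eqP /val_inj E; move: U; rewrite E /= !inE eqxx ?orbT ?andbF //) |
  (apply: (@three01 (val a1) (val p) (val q)) => //;
   apply/negP => /eqP /val_inj E; move: U; rewrite E /= !inE eqxx ?orbT ?andbF //) |
  (apply: (@three01 (val a2) (val p) (val q)) => //;
   apply/negP => /eqP /val_inj E; move: U; rewrite E /= !inE eqxx ?orbT ?andbF //) ].
Qed.


Lemma sum_ord3 (R : realFieldType) (k : nat) (G : nat -> R) :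
  \sum_(j < k.+3) G j = G 0%N + G 1%N + G 2%N + \sum_(3 <= j < k.+3) G j.
Proof. by rewrite -(big_mkord xpredT) big_ltn // big_ltn // big_ltn // !addrA. Qed.

Lemma sum_const3 (R : realFieldType) (k : nat) (G : nat -> R) c :
  (forall j, (3 <= j)%N -> G j = c) -> \sum_(3 <= j < k.+3) G j = c * k%:R.
Proof.
move=> h; rewrite (eq_big_nat _ _ (F2 := fun=> c)); last by move=> j /andP [/h].
rewrite sumr_const_nat mulr_natr; have -> : (k.+3 - 3 = k)%N by lia.
by [].
Qed.

Lemma rowsum (R : realFieldType) (k : nat) (g : nat -> R) (i : nat) :
  \sum_(j < k.+3) (fcomp i j || fcomp j i)%:R * g j =
  match i with 0 => g 1%N + g 2%N + \sum_(3 <= j < k.+3) g j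
  | 1 => g 0%N + \sum_(3 <= j < k.+3) g j
  | 2 => g 0%N | _ => g 0%N + g 1%N end.
Proof.
rewrite (@sum_ord3 R k (fun j => (fcomp i j || fcomp j i)%:R * g j)) /=.
case: i => [|[|[|i]]].
- rewrite /fcomp /= mul0r mul1r mul1r add0r; congr (_ + _).
  by apply: eq_big_nat => j /andP [hj _]; case: j hj => [|[|[|j]]] //= _; rewrite mul1r.
- rewrite /fcomp /= mul0r mul0r mul1r !addr0; congr (_ + _).
  by apply: eq_big_nat => j /andP [hj _]; case: j hj => [|[|[|j]]] //= _; rewrite mul1r.
- rewrite /fcomp /= mul0r mul0r mul1r !addr0.
  rewrite (eq_big_nat _ _ (F2 := fun=> 0)) ?big1 ?addr0 //.
  by move=> j /andP [hj _]; case: j hj => [|[|[|j]]] //= _; rewrite mul0r.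
- rewrite /fcomp /= mul0r mul1r mul1r addr0.
  rewrite (eq_big_nat _ _ (F2 := fun=> 0)) ?big1 ?addr0 //.
  by move=> j /andP [hj _]; case: j hj => [|[|[|j]]] //= _; rewrite mul0r.
Qed.

Lemma degsum (R : realFieldType) k (i : nat) :
  \sum_(j < k.+3) (fcomp i j || fcomp j i)%:R =
  (match i with 0 => k + 2 | 1 => k + 1 | 2 => 1 | _ => 2 end)%N%:R :> R.
Proof.
rewrite -(eq_bigr _ (fun j _ => mulr1 _)) (@rowsum R k (fun=> (1 : R)) i).
rewrite (@sum_const3 R k (fun=> (1 : R)) 1) // mul1r.
by case: i => [|[|[|i]]]; rewrite ?natrD //; lra.
Qed.

Lemma comp_nedges k : nedges (@ecomp k) = (2 * k + 2)%N.
Proof.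
have h := @handshake _ _ (comp_simple k).
have hR : ((nedges (@ecomp k)).*2)%:R = (4 * k + 4)%N%:R :> rat.
  rewrite h natr_sum; under eq_bigr do rewrite natr_sum.
  under eq_bigr do rewrite degsum.
  rewrite (@sum_ord3 rat k (fun i => (match i with 0 => k + 2 | 1 => k + 1 | 2 => 1 | _ => 2 end)%N%:R)).
  rewrite (@sum_const3 rat k _ 2%N%:R); last by case=> [|[|[|]]].
  rewrite !natrD; lra.
move/eqP: hR; rewrite eqr_nat => /eqP; lia.
Qed.

Lemma comp_rho (R : realType) k (lam : R) :
  k%:R + 1 <= lam ^+ 2 -> 0 < lam ->
  (lam ^+ 2 - k%:R) * (lam ^+ 2 - 1 - k%:R) = (lam + k%:R) ^+ 2 ->
  is_spectral_radius (@ecomp k) lam.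
Proof.
move=> l2 l0 quart.
set K : R := k%:R.
have K0 : 0 <= K by rewrite /K ler0n.
set D := lam ^+ 2 - K.
have D0 : 0 < D by rewrite /D; lra.
set b := (lam + K) / D.
have b0 : 0 < b by rewrite /b divr_gt0 //; lra.
set l := (1 + b) / lam.
have lp : 0 < l by rewrite /l divr_gt0 //; lra.
pose g (j : nat) : R := match j with 0 => 1 | 1 => b | 2 => lam^-1 | _ => l end.
apply: (@perron_max R k.+3 (@ecomp k) lam (fun j => g j) ord0 (proj1 (comp_simple k))).
  move=> i; rewrite /g; case: (nat_of_ord i) => [|[|[|j]]] //; by rewrite ?invr_gt0.
move=> i; rewrite /ecomp.
rewrite (@rowsum R k g i) (@sum_const3 R k g l); last by case=> [|[|[|]]].
have lam0 : lam != 0 by rewrite gt_eqF.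
have D0' : D != 0 by rewrite gt_eqF.
case: (nat_of_ord i) => [|[|[|j]]] /=.
- apply/eqP; rewrite -subr_eq0.
  have -> : b + lam^-1 + l * K - lam * 1 =
     ((lam + K) ^+ 2 - D * (lam ^+ 2 - 1 - K)) / (lam * D).
    by rewrite /l /b; field; apply/andP; split.
  by rewrite -quart /D subrr mul0r.
- rewrite /l /b /D; field.
  by apply/andP; split => //; rewrite -/D.
- by rewrite mulfV.
- by rewrite /l mulrC divfK.
Qed.

Lemma delta_bound (R : realType) (k : nat) (lam : R) :
  k%:R + 1 <= lam ^+ 2 -> 0 < lam ->
  (lam ^+ 2 - k%:R) * (lam ^+ 2 - 1 - k%:R) = (lam + k%:R) ^+ 2 ->
  3 / 10 < lam ^+ 2 - lam - 2 * k%:R.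
Proof.
move=> h1 h2 h3.
have K0 : 0 <= (k%:R : R) by rewrite ler0n.
set K : R := k%:R in h1 h3 K0 *.
set d := lam ^+ 2 - lam - 2 * K.
have hd : d * (2 * (lam + K) + d - 1) = lam + K.
  have e : lam ^+ 2 = lam + 2 * K + d by rewrite /d; ring.
  rewrite e in h3; move: h3; rewrite -!addrA.
  move=> h3; rewrite -[RHS]mulr1. nra.
have hs : 2 * (lam + K) + d - 1 >= lam + K by rewrite /d; nra.
nra.
Qed.

Lemma sum_ind_card (R : realType) n (A : {set 'I_n}) (b : 'I_n -> bool) :
  \sum_(v in A) (b v)%:R = (#|[set v in A | b v]|)%:R :> R.
Proof.
rewrite -sum1_card natr_sum [RHS]big_mkcond [LHS]big_mkcond /=.
by apply: eq_bigr => v _; rewrite inE; case: (v \in A); case: (b v).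
Qed.

Lemma split3 (R : realType) n (u : 'I_n) (N : {set 'I_n}) (F : 'I_n -> R) :
  u \notin N ->
  \sum_z F z = F u + \sum_(z in N) F z +
     \sum_(z in [set v | (v != u) && (v \notin N)]) F z.
Proof.
move=> uN; rewrite (bigD1 u) //= (bigID (fun z => z \in N)) /= addrA.
congr (_ + _ + _); apply: eq_bigl => z; rewrite ?inE.
  by case: (boolP (z \in N)) => h; rewrite ?andbT ?andbF //; case: eqP h uN => // -> ->.
by rewrite andbC.
Qed.

Lemma even_k (m : nat) : (38 <= m)%N -> ~~ odd m ->
  m = (2 * (m %/ 2 - 1) + 2)%N /\ (18 <= m %/ 2 - 1)%N.
Proof. move=> h1 h2; have := modn2 m; rewrite (negbTE h2) /= => hm; lia. Qed.
Lemma pick2 (T : finType) (A : {set T}) (x y : T) : (3 < #|A|)%N ->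
  exists a b, [/\ a \in A, b \in A, a != b & [/\ a != x, a != y, b != x & b != y]].
Proof.
move=> h.
have h1 := cardsD1 x A; have h2 := cardsD1 y (A :\ x).
have b1 : ((x \in A) <= 1)%N by case: (x \in A).
have b2 : ((y \in A :\ x) <= 1)%N by case: (_ \in _).
have : (0 < #|A :\ x :\ y|)%N by lia.
case/card_gt0P => a aB.
have h3 := cardsD1 a (A :\ x :\ y); rewrite aB in h3.
have : (0 < #|A :\ x :\ y :\ a|)%N by lia.
case/card_gt0P => b bB.
move: aB bB; rewrite !in_setD1 => /and3P [ay ax aA] /and4P [ba by' bx bA].
by exists a, b; split=> //; rewrite eq_sym.
Qed.

Theorem claim5 (R : realType) (m n : nat) (e : rel 'I_n) (rho : R)
  (x : 'cV[R]_n) (u : 'I_n) :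
  (38 <= m)%N -> ~~ odd m ->
  extremal_H43 m e rho ->
  perron_vector e rho x ->
  (forall v : 'I_n, x v 0 <= x u 0) ->
  let N := nbh e u in
  let Aplus := [set v in N | [exists w in N, e v w]] in
  let W := [set v : 'I_n | (v != u) && (v \notin N)] in
  (exists t : nat, (1 <= t)%N /\
     exists c : 'I_n, [/\ c \in Aplus, #|Aplus| = t.+1 &
       {in Aplus &, forall v w, e v w = ((v == c) (+) (w == c))}]) ->
  W = set0.
Proof.
move=> m38 mev [[[se ie] fr ne noi sr] ext] [xp xn xe] xm N Aplus W.
move=> [t [t1 [c [cA ct starE]]]].
case: (set_0Vmem W) => [//|[w wW]]; exfalso.
pose X z := x z 0.
have xu0 : 0 < X u by apply: xp.
have Xle z : X z <= X u by apply: xm.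
have Xge z : 0 <= X z by apply/ltW/xp.
have inN v : (v \in N) = e u v by rewrite /N /nbh inE.
have inW v : (v \in W) = (v != u) && (v \notin N) by rewrite /W inE.
have uN : u \notin N by rewrite inN ie.
have eig v : \sum_z (e v z)%:R * X z = rho * X v.
  have := congr1 (fun M : 'cV_n => M v 0) xe; rewrite !mxE => <-.
  by apply: eq_bigr => z _; rewrite /adj mxE.
pose dN z := \sum_(v in N) (e z v)%:R : R.
pose dW z := \sum_(v in W) (e z v)%:R : R.
pose deg z := \sum_v (e z v)%:R : R.
have dN0 z : 0 <= dN z by apply: sumr_ge0 => v _; rewrite ler0n.
have dW0 z : 0 <= dW z by apply: sumr_ge0 => v _; rewrite ler0n.
have degE z : deg z = (e z u)%:R + dN z + dW z by rewrite /deg (@split3 R n u N _ uN).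
have hs : (m.*2)%:R = \sum_z deg z :> R.
  rewrite -ne (@handshake n e (conj se ie)) natr_sum; apply: eq_bigr => z _.
  by rewrite natr_sum.
have AN v : v \in Aplus -> v \in N by rewrite inE => /andP [].
have inA v : v \in N -> (exists2 z, z \in N & e v z) -> v \in Aplus.
  by move=> vN [z zN ez]; rewrite inE vN /=; apply/existsP; exists z; rewrite zN.
have cN : c \in N by apply: AN.
have deguE : deg u = #|N|%:R /\ dN u = #|N|%:R.
  have h : dN u = #|N|%:R.
    rewrite /dN; under eq_bigr => v vN do rewrite -inN vN.
    by rewrite sumr_const.
  split=> //; rewrite degE ie add0r h /dW big1 ?addr0 // => v.
  by rewrite inW => /andP [_ vN]; rewrite -inN (negbTE vN).
have eNu z : z \in N -> e z u by rewrite se -inN.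
have eWu z : z \in W -> e z u = false.
  by rewrite inW se -inN => /andP [_ /negbTE].
have starN z v : z \in N -> z != c -> v \in N -> e z v = e z c && (v == c).
  move=> zN zc vN; case ez: (e z v).
  - have zA : z \in Aplus by apply: inA => //; exists v.
    have vA : v \in Aplus by apply: inA => //; exists z => //; rewrite se.
    move: (starE _ _ zA vA); rewrite ez (negbTE zc) /= => vc.
    by move/esym/eqP: vc => vc; rewrite -vc ez eqxx.
  - case vc: (v == c); last by rewrite andbF.
    by move/eqP: vc ez => ->; rewrite andbT.
have dNz z : z \in N -> z != c -> dN z = (e z c)%:R.
  move=> zN zc; rewrite /dN; under eq_bigr => v vN do rewrite starN //.
  rewrite (bigD1 c cN) /= eqxx andbT big1 ?addr0 // => v /andP [_ vc].
  by rewrite (negbTE vc) andbF.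
set T := dN c.
have SNc : \sum_(z in N | z != c) dN z = T.
  have -> : T = \sum_(z in N | z != c) (e c z)%:R.
    by rewrite /T /dN (bigD1 c cN) /= ie add0r.
  by apply: eq_bigr => z /andP [zN zc]; rewrite dNz // se.
have [l lA lc] : exists2 l, l \in Aplus & l != c.
  have : (0 < #|Aplus :\ c|)%N.
    by move: ct; rewrite (cardsD1 c Aplus) cA add1n => -[->].
  by case/card_gt0P => l; rewrite in_setD1 => /andP [lc lA]; exists l.
have lN : l \in N by apply: AN.
have ecl : e c l by rewrite (starE _ _ cA lA) eqxx (negbTE lc).
have T1 : 1 <= T.
  rewrite /T /dN (bigD1 l lN) /= ecl -[((true : nat)%:R : R)]/(1 : R).
  have : 0 <= \sum_(v in N | v != l) (e c v)%:R :> R.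
    by apply: sumr_ge0 => v _; rewrite ler0n.
  lra.
have rhoU : rho * X u = \sum_(v in N) X v.
  rewrite -eig [RHS]big_mkcond /=; apply: eq_bigr => z _; rewrite inN.
  by case: (e u z); rewrite ?mul1r ?mul0r.
have rho2 : rho * (rho * X u) = \sum_z dN z * X z.
  rewrite rhoU mulr_sumr.
  under eq_bigr => v _ do rewrite -eig.
  rewrite exchange_big /=; apply: eq_bigr => z _; rewrite /dN mulr_suml.
  by apply: eq_bigr => v _; rewrite se.
have rho2s : \sum_z dN z * X z =
    dN u * X u + \sum_(z in N) dN z * X z + \sum_(z in W) dN z * X z.
  by rewrite (@split3 R n u N _ uN).
have SN : \sum_(z in N) dN z * X z <= (T - 1) * X u + rho * X u.
  rewrite (bigD1 c cN) /= -/T.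
  have h1 : \sum_(z in N | z != c) dN z * X z <= \sum_(z in N | z != c) X z.
    apply: ler_sum => z /andP [zN zc]; rewrite dNz //.
    by case: (e z c); rewrite ?mul1r ?mul0r.
  have h2 : rho * X u = X c + \sum_(z in N | z != c) X z by rewrite rhoU (bigD1 c cN).
  have h3 := Xle c.
  nra.
have SdN : \sum_(z in N) dN z = 2 * T.
  by rewrite (bigD1 c cN) /= -/T SNc; ring.
have cross : \sum_(z in N) dW z = \sum_(z in W) dN z.
  rewrite /dW /dN exchange_big /=; apply: eq_bigr => z _; apply: eq_bigr => v _.
  by rewrite se.
have Hm : 2 * m%:R = 2 * #|N|%:R + 2 * T + 2 * \sum_(z in W) dN z + \sum_(z in W) dW z.
  rewrite -natrM mul2n hs (@split3 R n u N _ uN) -/W (proj1 deguE).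
  have -> : \sum_(z in N) deg z = \sum_(z in N) (1 + dN z + dW z).
    by apply: eq_bigr => z zN; rewrite degE eNu.
  have -> : \sum_(z in W) deg z = \sum_(z in W) (dN z + dW z).
    by apply: eq_bigr => z zW; rewrite degE eWu // add0r.
  rewrite !big_split /= SdN cross sumr_const.
  rewrite -[1 *+ #|N|]/(#|N|%:R).
  ring.
set k := (m %/ 2 - 1)%N.
have [mk k18n] : m = (2 * k + 2)%N /\ (18 <= k)%N by exact: even_k.
have [lam [l2 l0 lq]] := lam_exists R k.
have rl : lam <= rho.
  apply: (ext k.+3 (@ecomp k) lam (comp_simple k) (comp_free k) _ (comp_noiso k)
            (@comp_rho R k lam l2 l0 lq)).
  by rewrite comp_nedges mk.
have dl := @delta_bound R k lam l2 l0 lq.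
have k18 : 18 <= (k%:R : R) by rewrite (ler_nat R 18 k).
have mR : m%:R = 2 * k%:R + 2 :> R by rewrite mk natrD natrM.
have lam4 : 4 <= lam.
  rewrite -(@ler_sqr _ 4 lam) ?nnegrE ?ltW //; lra.
have rho4 : 4 <= rho by lra.
have rr : lam ^+ 2 - lam <= rho ^+ 2 - rho.
  have h : 0 <= (rho - lam) * (rho + lam - 1) by apply: mulr_ge0; lra.
  have e1 : (rho - lam) * (rho + lam - 1) = (rho ^+ 2 - rho) - (lam ^+ 2 - lam) by ring.
  lra.
set Sd := \sum_(z in W) dN z.
set SdW := \sum_(z in W) dW z.
set slack := \sum_(z in W) dN z * (X u - X z).
have slE : \sum_(z in W) dN z * X z = Sd * X u - slack.
  by rewrite /Sd /slack mulr_suml -sumrB; apply: eq_bigr => z _; ring.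
have sl0 z : 0 <= dN z * (X u - X z) by rewrite mulr_ge0 // subr_ge0.
have slw : dN w * (X u - X w) <= slack.
  rewrite /slack (bigD1 w wW) /=.
  have : 0 <= \sum_(z in W | z != w) dN z * (X u - X z) by apply: sumr_ge0.
  lra.
have SdW0 : 0 <= SdW by apply: sumr_ge0.
set a := #|N|%:R : R.
have KEY : (rho ^+ 2 - rho) * X u <= (m%:R - 1 - SdW / 2) * X u - slack.
  have h1 := rho2; rewrite rho2s (proj2 deguE) slE -/a in h1.
  have h2 : m%:R = a + T + Sd + SdW / 2 by move: Hm; rewrite /a /Sd /SdW; lra.
  have e1 : (rho ^+ 2 - rho) * X u = rho * (rho * X u) - rho * X u by ring.
  have e2 : (m%:R - 1 - SdW / 2) * X u - slack =
     a * X u + (T - 1) * X u + Sd * X u - slack by rewrite h2; ring.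
  rewrite e1 e2; lra.
case: (pickP (fun v => (v \in W) && e w v)) => [w' /andP [w'W eww'] | hno].
  have w'w : w' != w by apply: contraTneq eww' => ->; rewrite ie.
  have dWw : 1 <= dW w.
    rewrite /dW (bigD1 w' w'W) /= eww' -[((true : nat)%:R : R)]/(1 : R).
    have : 0 <= \sum_(v in W | v != w') (e w v)%:R :> R.
      by apply: sumr_ge0 => v _; rewrite ler0n.
    lra.
  have dWw' : 1 <= dW w'.
    rewrite /dW (bigD1 w wW) /= se eww' -[((true : nat)%:R : R)]/(1 : R).
    have : 0 <= \sum_(v in W | v != w) (e w' v)%:R :> R.
      by apply: sumr_ge0 => v _; rewrite ler0n.
    lra.
  have S2 : 2 <= SdW.
    rewrite /SdW (bigD1 w wW) /= (bigD1 w') /=; last by apply/andP; split.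
    have h : forall r : R, 0 <= r -> 2 <= dW w + (dW w' + r) by move=> r hr; lra.
    by apply: h; apply: sumr_ge0.
  have sl00 : 0 <= slack by apply: sumr_ge0.
  have : (rho ^+ 2 - rho - (m%:R - 2)) * X u <= 0.
    have e1 : (rho ^+ 2 - rho - (m%:R - 2)) * X u =
      (rho ^+ 2 - rho) * X u - ((m%:R - 1 - SdW / 2) * X u - slack) - (SdW / 2 - 1) * X u - slack
      by ring.
    have h3 : 0 <= (SdW / 2 - 1) * X u by apply: mulr_ge0; lra.
    lra.
  rewrite pmulr_lle0 //; lra.
have dWw : dW w = 0.
  by rewrite /dW big1 // => v vW; move: (hno v); rewrite vW /= => ->.
set d := dN w.
have rhoXw : rho * X w <= d * X u.
  rewrite -eig.
  have -> : d = deg w by rewrite degE eWu // dWw add0r addr0.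
  rewrite /deg mulr_suml; apply: ler_sum => z _.
  by rewrite ler_wpM2l ?ler0n.
have d1 : 1 <= d.
  have [z ewz] := noi w.
  have zN : z \in N.
    move: (hno z); rewrite ewz andbT inW => /negbT; rewrite negb_and negbK.
    case/orP => [/eqP zu|/negPn //].
    by move: ewz; rewrite zu eWu.
  rewrite /d /dN (bigD1 z zN) /= ewz -[((true : nat)%:R : R)]/(1 : R).
  have : 0 <= \sum_(v in N | v != z) (e w v)%:R :> R.
    by apply: sumr_ge0 => v _; rewrite ler0n.
  lra.
have d3 : d <= 3.
  rewrite /d /dN sum_ind_card.
  set S := [set v in N | e w v].
  rewrite -[3 : R]/((3%N)%:R) ler_nat leqNgt; apply/negP => S4.
  have [a1 [a3 [a1S a3S a13 [a1c a1l a3c a3l]]]] := @pick2 _ S c l S4.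
  move: a1S a3S; rewrite !inE => /andP [a1N ewa1] /andP [a3N ewa3].
  rewrite -?inN in a1N a3N.
  have wN : w \notin N by move: wW; rewrite inW => /andP [].
  have wu : w != u by move: wW; rewrite inW => /andP [].
  have neN (p q : 'I_n) : p \in N -> q \notin N -> p != q.
    by move=> pN qN; apply: contraNneq qN => <-.
  apply: fr; exists u, a1, w, a3, c, l; split.
  - rewrite /= !inE !negb_or !andbT; repeat (apply/andP; split);
    first [ by apply: neN | by rewrite eq_sym; apply: neN | done | by rewrite eq_sym ].
  - by rewrite -!inN a1N se ewa1 ewa3 se -inN a3N.
  - by rewrite -inN cN ecl se -inN lN.
have hslack : (rho - 1) * X u <= rho * slack.
  have h1 : (rho - 1) * X u <= rho * (d * (X u - X w)).
    have e1 : rho * (d * (X u - X w)) = d * (rho * X u) - d * (rho * X w) by ring.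
    have h2 : d * (rho * X w) <= d * (d * X u) by rewrite ler_wpM2l //; lra.
    have h3 : 0 <= (d - 1) * (rho - d - 1) by apply: mulr_ge0; lra.
    have h4 : 0 <= ((d - 1) * (rho - d - 1)) * X u by apply: mulr_ge0; lra.
    have e2 : ((d - 1) * (rho - d - 1)) * X u =
       d * (rho * X u) - d * (d * X u) - (rho - 1) * X u by ring.
    lra.
  apply: (le_trans h1); rewrite ler_wpM2l //; lra.
have sl1 : rho * ((rho ^+ 2 - rho) * X u) <= rho * ((m%:R - 1) * X u - slack).
  rewrite ler_wpM2l ?(le_trans _ rho4) //.
  apply: (le_trans KEY).
  have : 0 <= SdW / 2 * X u by apply: mulr_ge0; lra.
  have ee : (m%:R - 1 - SdW / 2) * X u = (m%:R - 1) * X u - SdW / 2 * X u by ring.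
  lra.
have : (rho * (rho ^+ 2 - rho - (m%:R - 2)) - 1) * X u <= 0.
  have ee : (rho * (rho ^+ 2 - rho - (m%:R - 2)) - 1) * X u =
    rho * ((rho ^+ 2 - rho) * X u) - rho * ((m%:R - 1) * X u - slack)
    - (rho * slack - (rho - 1) * X u) by ring.
  lra.
rewrite pmulr_lle0 // subr_le0.
have : 3 / 10 < rho ^+ 2 - rho - (m%:R - 2) by lra.
move=> h h'.
have : 4 * (3 / 10) <= rho * (rho ^+ 2 - rho - (m%:R - 2)).
  apply: ler_pM; lra.
lra.
Qed.
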